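(* Let $K\ge1$ and $T\ge2$ be integers with $N=KT$ odd, let $\eta$ be an integer, and let $a_1,\dots,a_{T-1}$ be binary sequences of period $K$. Let $s=I(0_K,a_1,\dots,a_{T-1})$ and $s'=I(1_K,a_1,\dots,a_{T-1})$ (period $N$), and let $$u=I\big(s',\ L^{4^{-1}+\eta}(s')+1,\ L^{2^{-1}}(s)+1,\ L^{3\cdot 4^{-1}+\eta}(s)+1\big),$$ a binary sequence of period $4N$. For $0\le\mu<4N$ write $\mu=4\mu_1+\mu_2$ with $\mu_2\in\{0,1,2,3\}$, $0\le\mu_1<N$, and set $\tau_2=\langle\mu_1\rangle_T$, $\tau_1^{\pm}=\langle 4^{-1}\pm\eta+\mu_1\rangle_T$, $\tau_2^{\pm}=\langle 3\cdot4^{-1}\pm\eta+\mu_1\rangle_T$. (1) If $d(a_x)=c_1$ for all $x=1,\dots,T-1$ (a constant $c_1$), then $$R_u(\mu)=\begin{cases}4KT&\text{if }\mu=0,\\ 4R_s(\mu_1)&\text{if }\mu_2=0,\ \tau_2=0,\ \mu\ne0,\\ 4R_s(\mu_1)+8c_1&\text{if }\mu_2=0,\ \tau_2\ne0,\\ 0&\text{if }\mu_2=1,\ \tau_1^+=0,\\ -4c_1&\text{if }\mu_2=1,\ \tau_1^+\ne0,\\ 0&\text{if }\mu_2=2,\\ 0&\text{if }\mu_2=3,\ \tau_2^-=0,\\ -4c_1&\text{if }\mu_2=3,\ \tau_2^-\ne0.\end{cases}$$ (2) If $d(a_x)+d(a_{T-x})=0$ for all $x=1,\dots,T-1$, then $$R_u(\mu)=\begin{cases}4KT&\text{if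 }\mu=0,\\ 4R_s(\mu_1)&\text{if }\mu_2=0,\ \mu\ne0,\\ 0&\text{if }\mu_2=1,\ \tau_1^-=0,\\ 4d(a_{\tau_1^-})&\text{if }\mu_2=1,\ \tau_1^-\ne0,\\ 0&\text{if }\mu_2=2,\\ 0&\text{if }\mu_2=3,\ \tau_2^+=0,\\ -4d(a_{\tau_2^+})&\text{if }\mu_2=3,\ \tau_2^+\ne0.\end{cases}$$
   Context: A binary sequence of period $n$ is a map $\mathbb{Z}\to\{0,1\}$ with period $n$ (indices mod $n$). For binary sequences $a,b$ of period $n$, $R_{a,b}(\tau)=\sum_{t=0}^{n-1}(-1)^{a(t)+b(t+\tau)}$ and $R_a=R_{a,a}$. For binary sequences $b_0,\dots,b_{m-1}$ of common period $n$, $I(b_0,\dots,b_{m-1})$ is the binary sequence $v$ of period $nm$ with $v(im+j)=b_j(i)$ for $0\le i\le n-1$, $0\le j\le m-1$. $0_K$, $1_K$ are the all-zero and all-one sequences of period $K$. For a binary sequence $a$ of period $K$, $d(a)=2|\{0\le t\le K-1:a(t)=1\}|-K$. For a sequence $v$ of period $N$ and an integer $m$, $L^m(v)$ is the left shift $L^m(v)(t)=v(t+m)$, and $v+1$ is the complement $t\mapsto v(t)+1 \bmod 2$. Since $N$ is odd, $4^{-1}$ and $2^{-1}$ denote integers with $4\cdot4^{-1}\equiv1$ and $2\cdot2^{-1}\equiv1 \pmod N$ (shifts depend only on their class mod $N$). For an integer $m$, $\langle m\rangle_T\in\{0,\dots,T-1\}$ denotes the residue of $m$ modulo $T$ (well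 defined on classes mod $N$ since $T\mid N$). *)

(* Defs.v *)
From mathcomp Require Import all_boot all_order all_algebra.
Set Implicit Arguments. Unset Strict Implicit. Unset Printing Implicit Defensive.
Import Order.TTheory GRing.Theory Num.Theory.
Local Open Scope ring_scope.

(* A binary sequence is a map int -> bool; "period n" is a separate
   hypothesis (periodic n a). All indices are integers. *)
Definition binseq := int -> bool.

Definition periodic (n : nat) (a : binseq) : Prop :=
  forall t : int, a (t + n%:Z) = a t.

Definition corr (n : nat) (a b : binseq) (tau : int) : int :=
  \sum_(t < n) (-1) ^+ addn (nat_of_bool (a t%:Z)) (nat_of_bool (b (t%:Z + tau))).

Definition acorr (n : nat) (a : binseq) (tau : int) : int := corr n a a tau.

(* interleaving I(b_0,...,b_{m-1}) : v(i m + j) = b_j(i) *)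
Definition interleave (m : nat) (b : nat -> binseq) : binseq :=
  fun t => b `|(t %% m%:Z)%Z|%N ((t %/ m%:Z)%Z).

Definition zeros : binseq := fun _ => false.
Definition ones : binseq := fun _ => true.

Definition dbal (K : nat) (a : binseq) : int :=
  2 * (#|[set t : 'I_K | a (nat_of_ord t)%:Z]|)%:Z - K%:Z.

Definition Lsh (m : int) (v : binseq) : binseq := fun t => v (t + m).
Definition cmpl (v : binseq) : binseq := fun t => ~~ v t.

Definition resT (T : nat) (m : int) : int := (m %% T%:Z)%Z.

(* Main.v *)
From mathcomp Require Import all_boot all_order all_algebra.
Require Import Defs.
From mathcomp Require Import zify ring lra.
Import Order.TTheory GRing.Theory Num.Theory.
Set Implicit Arguments. Unset Strict Implicit. Unset Printing Implicit Defensive.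
Local Open Scope ring_scope.

Lemma sum_split_mul (F : nat -> int) (m n : nat) :
  \sum_(t < m * n) F t = \sum_(i < n) \sum_(j < m) F (i * m + j)%N.
Proof.
elim: n => [|n IH]; first by rewrite muln0 !big_ord0.
rewrite big_ord_recr /= -IH -!(big_mkord xpredT).
rewrite (big_cat_nat _ (n := m * n)) //; last by rewrite leq_mul2l leqnSn orbT.
congr (_ + _).
rewrite -[X in \sum_(X <= _ < _) _](add0n (m*n)) big_addn mulnS addnK big_mkord.
apply: eq_bigr => j _; congr (F _); lia.
Qed.

Definition pf (n : nat) (h : int -> int) := forall t, h (t + n%:Z) = h t.

Lemma pf_mul n h : pf n h -> forall (k : int) t, h (t + k * n%:Z) = h t.
Proof.
move=> Hh k t; case: k => k.
  elim: k t => [|k IH] t; first by rewrite mul0r addr0.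
  have -> : Posz k.+1 = k%:Z + 1 by rewrite -addn1 PoszD.
  by rewrite mulrDl mul1r addrA Hh IH.
elim: k t => [|k IH] t.
  by rewrite NegzE mulNr mul1r -{2}(subrK n%:Z t) Hh.
rewrite -(IH t) -(Hh (t + Negz k.+1 * n)); congr h.
rewrite !NegzE; lia.
Qed.

Lemma shift_sum1 n h : pf n h -> \sum_(t < n) h (t%:Z + 1) = \sum_(t < n) h t%:Z.
Proof.
case: n => [|n] Hh; first by rewrite !big_ord0.
rewrite big_ord_recr big_ord_recl /=.
have -> : h (n%:Z + 1) = h 0.
  by rewrite -(Hh 0) add0r -addn1 PoszD.
rewrite addrC; congr (_ + _); apply: eq_bigr => i _.
by rewrite /bump /= add1n -addn1 PoszD.
Qed.

Lemma shift_sum n h : pf n h -> forall c, \sum_(t < n) h (t%:Z + c) = \sum_(t < n) h t%:Z.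
Proof.
have nat_case : forall h, pf n h -> forall k : nat, \sum_(t < n) h (t%:Z + k%:Z) = \sum_(t < n) h t%:Z.
  move=> h0 H0 k; elim: k h0 H0 => [|k IH] h0 H0; first by under eq_bigr do rewrite addr0.
  have H1 : pf n (fun x => h0 (x + k%:Z)).
    by move=> t; rewrite -addrA (addrC n%:Z) addrA H0.
  transitivity (\sum_(t<n) (fun x => h0 (x + k%:Z)) (t%:Z + 1)).
    apply: eq_bigr => i _ /=; congr h0; rewrite -addn1 PoszD; lia.
  by rewrite (shift_sum1 H1) IH.
move=> Hh c; case: c => k; first exact: nat_case.
have H1 : pf n (fun x => h (x + Negz k)).
  by move=> t; rewrite -addrA (addrC n%:Z) addrA Hh.
rewrite -(nat_case _ H1 k.+1); apply: eq_bigr => i _ /=; congr h.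
rewrite NegzE; lia.
Qed.

Definition Cf (n : nat) (f g : int -> int) (c : int) : int :=
  \sum_(t < n) f t%:Z * g (t%:Z + c).

Lemma Cf_gen n f g (e1 e2 a b : int) : pf n f -> pf n g ->
  \sum_(t < n) (e1 * f (t%:Z + a)) * (e2 * g (t%:Z + b)) = e1 * e2 * Cf n f g (b - a).
Proof.
move=> Hf Hg; rewrite /Cf mulr_sumr.
have Hh : pf n (fun x => e1 * e2 * (f x * g (x + (b - a)))).
  by move=> t; rewrite Hf -addrA (addrC n%:Z) addrA Hg.
transitivity (\sum_(t < n) (fun x => e1 * e2 * (f x * g (x + (b - a)))) (t%:Z + a)).
  apply: eq_bigr => i _ /=.
  have -> : i%:Z + a + (b - a) = i%:Z + b by ring.
  ring.
by rewrite (shift_sum Hh a).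
Qed.

Lemma Cf_mod n f g x y : pf n g -> (n%:Z %| x - y)%Z -> Cf n f g x = Cf n f g y.
Proof.
move=> Hg /dvdzP [k Hk]; apply: eq_bigr => i _; congr (_ * _).
have -> : i%:Z + x = i%:Z + y + k * n%:Z by rewrite -Hk; ring.
by rewrite pf_mul.
Qed.

Lemma Cf_swap n f g c : pf n f -> pf n g -> Cf n f g c = Cf n g f (- c).
Proof.
move=> Hf Hg.
have Hh : pf n (fun x => g x * f (x - c)).
  by move=> t; rewrite Hg -addrA (addrC n%:Z) addrA Hf.
rewrite /Cf -(shift_sum Hh c); apply: eq_bigr => i _ /=.
by rewrite addrK mulrC.
Qed.

Lemma Cf_linl n f f1 f2 g c : (forall x, f x = f1 x - 2 * f2 x) ->
  Cf n f g c = Cf n f1 g c - 2 * Cf n f2 g c.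
Proof.
move=> H; rewrite /Cf mulr_sumr -sumrB; apply: eq_bigr => i _; rewrite H; ring.
Qed.

Lemma Cf_linr n f g g1 g2 c : (forall x, g x = g1 x - 2 * g2 x) ->
  Cf n f g c = Cf n f g1 c - 2 * Cf n f g2 c.
Proof.
move=> H; rewrite /Cf mulr_sumr -sumrB; apply: eq_bigr => i _; rewrite H; ring.
Qed.

Definition sg (b : bool) : int := if b then -1 else 1.

Lemma corr_Cf n a b c : corr n a b c = Cf n (fun x => sg (a x)) (fun x => sg (b x)) c.
Proof.
by apply: eq_bigr => i _ /=; case: (a _); case: (b _).
Qed.

Lemma interleave_eval m b (x : int) (r : nat) : (r < m)%N ->
  interleave m b (x * m%:Z + r%:Z) = b r x.
Proof.
move=> Hr; rewrite /interleave.
have m0 : m%:Z != 0 by apply/eqP; lia.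
rewrite divzMDl // divz_small; last by apply/andP; split; [|rewrite absz_nat]; lia.
rewrite addr0; congr b.
have -> : ((x * m%:Z + r%:Z) %% m%:Z)%Z = r%:Z.
  rewrite modzMDl modz_small //; apply/andP; split; lia.
by rewrite absz_nat.
Qed.

Lemma mod_lt (t : int) (m : nat) : (0 < m)%N -> (`|(t %% m%:Z)%Z| < m)%N.
Proof.
move=> Hm.
have h1 : (0 <= (t %% m%:Z)%Z) by apply: modz_ge0; apply/eqP; lia.
have h2 : ((t %% m%:Z)%Z < m%:Z) by apply: ltz_pmod; lia.
have : (`|(t %% m%:Z)%Z|%:Z < m%:Z) by rewrite gez0_abs.
by rewrite ltz_nat.
Qed.

Lemma interleave_per m k b : (0 < m)%N ->
  (forall j, (j < m)%N -> periodic k (b j)) -> periodic (k * m) (interleave m b).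
Proof.
move=> Hm Hb t; rewrite /interleave PoszM addrC.
have m0 : m%:Z != 0 by apply/eqP; lia.
rewrite divzMDl // modzMDl addrC.
by rewrite Hb // mod_lt.
Qed.

Lemma sum_split_mul_z (F : int -> int) (m n : nat) :
  \sum_(t < m * n) F t%:Z = \sum_(i < n) \sum_(j < m) F (i%:Z * m%:Z + j%:Z).
Proof.
rewrite (sum_split_mul (fun t => F t%:Z)); apply: eq_bigr => i _; apply: eq_bigr => j _.
by rewrite PoszD PoszM.
Qed.

Lemma decomp (N : nat) (u : binseq) (e : nat -> int) (B : nat -> int -> int) (o : nat -> int) (mu : nat) :
  (forall (X : int) (r : nat), (r < 4)%N -> sg (u (X * 4 + r%:Z)) = e r * B r (X + o r)) ->
  (forall r, pf N (B r)) ->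
  acorr (4 * N) u mu%:Z = \sum_(j < 4) e j * e ((j + mu %% 4) %% 4)%N *
     Cf N (B j) (B ((j + mu %% 4) %% 4)%N)
        (((mu %/ 4) + (j + mu %% 4) %/ 4)%N%:Z + o ((j + mu %% 4) %% 4)%N - o j).
Proof.
move=> Hu HB; rewrite /acorr corr_Cf /Cf (sum_split_mul_z (fun x => sg (u x) * sg (u (x + mu%:Z)))) exchange_big /=.
apply: eq_bigr => j _.
rewrite -Cf_gen //; apply: eq_bigr => i _.
rewrite Hu //; congr (_ * _).
have -> : i%:Z * 4 + j%:Z + mu%:Z =
   (i%:Z + ((mu %/ 4) + (j + mu %% 4) %/ 4)%N%:Z) * 4 + ((j + mu %% 4) %% 4)%N%:Z.
  have e1 := divn_eq mu 4; have e2 := divn_eq (j + mu %% 4) 4; lia.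
rewrite Hu ?ltn_pmod //; congr (_ * B _ _); ring.
Qed.

Lemma sum_sg_dbal K a : \sum_(k < K) sg (a k%:Z) = - dbal K a.
Proof.
rewrite /dbal.
have -> : (#|[set t : 'I_K | a (nat_of_ord t)%:Z]|)%:Z = \sum_(k < K) (nat_of_bool (a k%:Z))%:Z.
  rewrite -sum1_card big_mkcond /=.
  rewrite -[LHS]intz sumMz; apply: eq_bigr => i _; rewrite inE.
  by case: (a _).
have -> : K%:Z = \sum_(k < K) 1 by rewrite sumr_const card_ord natz.
rewrite mulr_sumr -sumrB -sumrN.
by apply: eq_bigr => i _; case: (a _).
Qed.

Definition dl (T : nat) (x : int) : int := if ((x %% T%:Z)%Z == 0) then 1 else 0.
Definition Dv (K T : nat) (a : nat -> binseq) (c : int) : int :=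
  if ((c %% T%:Z)%Z == 0) then K%:Z else - dbal K (a `|(c %% T%:Z)%Z|%N).

Lemma dl_kT (T : nat) (k : int) (j : nat) : (j < T)%N -> dl T (k * T%:Z + j%:Z) = if j == 0%N then 1 else 0.
Proof.
move=> Hj; rewrite /dl modzMDl modz_small; last by apply/andP; split; lia.
by case: j Hj.
Qed.

Lemma sum_dl_left (K T : nat) (F : int -> int) : (0 < T)%N ->
  \sum_(t < K * T) dl T t%:Z * F t%:Z = \sum_(k < K) F (k%:Z * T%:Z).
Proof.
move=> HT; rewrite mulnC (sum_split_mul_z (fun x => dl T x * F x)).
apply: eq_bigr => k _.
case: T HT => [//|T] _.
rewrite big_ord_recl /= dl_kT // mul1r addr0 big1 ?addr0 // => j _.
rewrite dl_kT ?(ltn_ord (lift ord0 j)) //.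
have -> : (bump 0 j == 0%N) = false by []. by rewrite mul0r.
Qed.

Lemma Dsum (K T : nat) (a : nat -> binseq) (b : nat -> binseq) (c : int) :
  (0 < K)%N -> (0 < T)%N ->
  (forall j, (0 < j < T)%N -> periodic K (a j)) ->
  (forall x, b 0%N x = false) -> (forall j x, (0 < j)%N -> b j x = a j x) ->
  Cf (K * T) (dl T) (fun x => sg (interleave T b x)) c = Dv K T a c.
Proof.
move=> HK HT Ha Hb0 Hbj.
rewrite /Cf (sum_dl_left K (fun x => sg (interleave T b (x + c)))) //.
have T0 : T%:Z != 0 by apply/eqP; lia.
have Hr := mod_lt c HT.
have Hk : forall k : int, k * T%:Z + c = (k + (c %/ T%:Z)%Z) * T%:Z + `|(c %% T%:Z)%Z|%N%:Z.
  move=> k; rewrite gez0_abs ?modz_ge0 // {1}(divz_eq c T%:Z); ring.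
under eq_bigr do rewrite Hk (interleave_eval _ _ Hr).
rewrite /Dv; case: ifP => [/eqP H0|Hn0].
  rewrite H0 /=.
  under eq_bigr do rewrite Hb0.
  by rewrite /= sumr_const card_ord natz.
have rpos : (0 < `|(c %% T%:Z)%Z|)%N by rewrite lt0n absz_eq0 Hn0.
under eq_bigr do rewrite Hbj //.
have Hp : pf K (fun x => sg (a `|(c %% T%:Z)%Z|%N x)).
  by move=> t; rewrite Ha // rpos Hr.
rewrite (shift_sum Hp (c %/ T%:Z)%Z).
exact: sum_sg_dbal.
Qed.

Lemma Ddsum (K T : nat) (c : int) : (0 < T)%N ->
  Cf (K * T) (dl T) (dl T) c = if ((c %% T%:Z)%Z == 0) then K%:Z else 0.
Proof.
move=> HT; rewrite /Cf (sum_dl_left K (fun x => dl T (x + c))) //.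
have Hk : forall k : int, dl T (k * T%:Z + c) = dl T c.
  by move=> k; rewrite /dl modzMDl.
under eq_bigr do rewrite Hk.
rewrite sumr_const card_ord /dl; case: ifP => _; first by rewrite natz.
by rewrite mul0rn.
Qed.

Lemma sPE (T : nat) (b b' : nat -> binseq) (x : int) :
  (forall y, b 0%N y = false) -> (forall y, b' 0%N y = true) ->
  (forall j y, (0 < j)%N -> b' j y = b j y) ->
  sg (interleave T b' x) = sg (interleave T b x) - 2 * dl T x.
Proof.
move=> H0 H0' Hj; rewrite /interleave /dl.
case: ifP => [/eqP ->|Hn] /=; first by rewrite H0 H0'.
rewrite Hj ?mulr0 ?subr0 //.
by rewrite lt0n absz_eq0 Hn.
Qed.

Lemma modNz_T (T : nat) (c : int) : (0 < T)%N -> ((c %% T%:Z)%Z != 0) ->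
  ((- c) %% T%:Z)%Z = T%:Z - (c %% T%:Z)%Z.
Proof.
move=> HT Hn.
have T0 : T%:Z != 0 by apply/eqP; lia.
have h1 : (0 <= (c %% T%:Z)%Z) by apply: modz_ge0.
have h2 : ((c %% T%:Z)%Z < T%:Z) by apply: ltz_pmod; lia.
have -> : - c = (- (c %/ T%:Z)%Z - 1) * T%:Z + (T%:Z - (c %% T%:Z)%Z).
  rewrite {1}(divz_eq c T%:Z); ring.
rewrite modzMDl modz_small //; apply/andP; split.
  by rewrite subr_ge0 ltW.
have : (c %% T%:Z)%Z != 0 := Hn.
move: h1 => /=; lia.
Qed.

Lemma sg_neg b : sg (~~ b) = - sg b.
Proof. by case: b; rewrite /= ?opprK. Qed.

Lemma dvd_comb (N x y c d z : int) : (N %| x)%Z -> (N %| y)%Z -> z = c * x + d * y -> (N %| z)%Z.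
Proof. by move=> Hx Hy ->; apply: rpredD; apply: dvdz_mull. Qed.

Lemma modN0 (T : nat) (c : int) : ((c %% T%:Z)%Z = 0) -> ((- c) %% T%:Z)%Z = 0.
Proof.
move=> H.
have -> : - c = (- (c %/ T%:Z)%Z) * T%:Z + 0.
  by rewrite {1}(divz_eq c T%:Z) H; ring.
by rewrite modzMDl mod0z.
Qed.

Lemma Dv_mode1 K T a c1 c : (0 < T)%N ->
  (forall x : nat, (0 < x < T)%N -> dbal K (a x) = c1) ->
  Dv K T a c = (if ((c %% T%:Z)%Z == 0) then K%:Z else - c1) /\
  Dv K T a (- c) = (if ((c %% T%:Z)%Z == 0) then K%:Z else - c1).
Proof.
move=> HT Hc; rewrite /Dv.
have Hr := mod_lt c HT.
case: eqP => [H0|/eqP Hn].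
  by rewrite modN0 // eqxx.
rewrite modNz_T //.
have h1 : (0 <= (c %% T%:Z)%Z) by apply: modz_ge0; apply/eqP; lia.
have Hr' : (0 < `|(c %% T%:Z)%Z|)%N by rewrite lt0n absz_eq0.
have E : T%:Z - (c %% T%:Z)%Z = (T - `|(c %% T%:Z)%Z|)%N%:Z.
  by rewrite -subzn ?gez0_abs // ltnW.
rewrite E.
have -> : ((T - `|(c %% T%:Z)%Z|)%N%:Z == 0) = false by apply/eqP; lia.
by rewrite absz_nat !Hc //; apply/andP; split; lia.
Qed.

Lemma Dv_mode2 K T a c : (0 < T)%N ->
  (forall x : nat, (0 < x < T)%N -> dbal K (a x) + dbal K (a (T - x)%N) = 0) ->
  Dv K T a (- c) = (if ((c %% T%:Z)%Z == 0) then K%:Z else - Dv K T a c).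
Proof.
move=> HT Hc; rewrite /Dv.
have Hr := mod_lt c HT.
have [H0|Hn] := eqVneq ((c %% T%:Z)%Z) 0.
  by rewrite modN0 // eqxx.
rewrite modNz_T //.
have h1 : (0 <= (c %% T%:Z)%Z) by apply: modz_ge0; apply/eqP; lia.
have Hr' : (0 < `|(c %% T%:Z)%Z|)%N by rewrite lt0n absz_eq0.
have E : T%:Z - (c %% T%:Z)%Z = (T - `|(c %% T%:Z)%Z|)%N%:Z.
  by rewrite -subzn ?gez0_abs // ltnW.
rewrite E.
have -> : ((T - `|(c %% T%:Z)%Z|)%N%:Z == 0) = false by apply/eqP; lia.
rewrite absz_nat opprK.
have := Hc `|(c %% T%:Z)%Z|%N ltac:(apply/andP; split; lia).
move=> H; apply/eqP; rewrite eq_sym -subr_eq0 opprK H //.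
Qed.

Theorem theorem3 (K T : nat) (eta inv4 inv2 : int) (a : nat -> binseq) :
  (1 <= K)%N -> (2 <= T)%N -> odd (K * T) ->
  (4 * inv4 == 1 %[mod (K * T)%:Z])%Z ->
  (2 * inv2 == 1 %[mod (K * T)%:Z])%Z ->
  (forall x : nat, (0 < x < T)%N -> periodic K (a x)) ->
  let N := (K * T)%N in
  let s := interleave T (fun j => if j == 0%N then zeros else a j) in
  let s' := interleave T (fun j => if j == 0%N then ones else a j) in
  let u := interleave 4 (fun j =>
             if j == 0%N then s'
             else if j == 1%N then cmpl (Lsh (inv4 + eta)%R s')
             else if j == 2%N then cmpl (Lsh inv2 s)
             else cmpl (Lsh (3 * inv4 + eta)%R s)) in
  (forall c1 : int,
     (forall x : nat, (0 < x < T)%N -> dbal K (a x) = c1) ->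
     forall mu : nat, (mu < 4 * N)%N ->
       let mu1 := (mu %/ 4)%N in
       let mu2 := (mu %% 4)%N in
       let tau2 := resT T mu1%:Z in
       let tau1p := resT T (inv4 + eta + mu1%:Z) in
       let tau2m := resT T (3 * inv4 - eta + mu1%:Z) in
       let R := acorr (4 * N) u mu%:Z in
       ((mu = 0%N -> R = 4 * (K * T)%:Z) /\
           (mu2 = 0%N -> tau2 = 0 -> mu <> 0%N -> R = 4 * acorr N s mu1%:Z) /\
           (mu2 = 0%N -> tau2 <> 0 -> R = 4 * acorr N s mu1%:Z + 8 * c1) /\
           (mu2 = 1%N -> tau1p = 0 -> R = 0) /\
           (mu2 = 1%N -> tau1p <> 0 -> R = - (4 * c1)) /\
           (mu2 = 2%N -> R = 0) /\
           (mu2 = 3%N -> tau2m = 0 -> R = 0) /\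
           (mu2 = 3%N -> tau2m <> 0 -> R = - (4 * c1))))
  /\
  ((forall x : nat, (0 < x < T)%N -> dbal K (a x) + dbal K (a (T - x)%N) = 0) ->
     forall mu : nat, (mu < 4 * N)%N ->
       let mu1 := (mu %/ 4)%N in
       let mu2 := (mu %% 4)%N in
       let tau1m := resT T (inv4 - eta + mu1%:Z) in
       let tau2p := resT T (3 * inv4 + eta + mu1%:Z) in
       let R := acorr (4 * N) u mu%:Z in
       ((mu = 0%N -> R = 4 * (K * T)%:Z) /\
           (mu2 = 0%N -> mu <> 0%N -> R = 4 * acorr N s mu1%:Z) /\
           (mu2 = 1%N -> tau1m = 0 -> R = 0) /\
           (mu2 = 1%N -> tau1m <> 0 -> R = 4 * dbal K (a `|tau1m|%N)) /\
           (mu2 = 2%N -> R = 0) /\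
           (mu2 = 3%N -> tau2p = 0 -> R = 0) /\
           (mu2 = 3%N -> tau2p <> 0 -> R = - (4 * dbal K (a `|tau2p|%N))))).
Proof.
move=> HK HT Hodd H4 H2 Ha N s s' u.
have T0 : (0 < T)%N by lia.
have K0 : (0 < K)%N by lia.
rewrite eqz_mod_dvd in H4; rewrite eqz_mod_dvd in H2.
pose sS := fun x => sg (s x).
pose sP := fun x => sg (s' x).
have Hper : forall c : binseq, periodic K c -> periodic N (interleave T (fun j => if j == 0%N then c else a j)).
  move=> c Hc; apply: interleave_per => // j Hj.
  case: eqP => [//|/eqP Hj0]; apply: Ha; lia.
have pS : pf N sS by move=> t; rewrite /sS /s Hper.
have pP : pf N sP by move=> t; rewrite /sP /s' Hper.
have pD : pf N (dl T) by move=> t; rewrite /dl /N PoszM addrC modzMDl.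
have sPE' : forall x, sP x = sS x - 2 * dl T x.
  move=> x; apply: sPE => [y|y|j y Hj] //; by have -> : (j == 0%N) = false by lia.
pose e4 := fun r : nat => if r == 0%N then 1 else -1 : int.
pose B := fun r : nat => if (r <= 1)%N then sP else sS.
pose o := fun r : nat => match r with 0%N => 0 | 1%N => inv4 + eta | 2%N => inv2 | _ => 3 * inv4 + eta end.
have Hu : forall (X : int) (r : nat), (r < 4)%N -> sg (u (X * 4 + r%:Z)) = e4 r * B r (X + o r).
  move=> X r Hr; rewrite /u (interleave_eval _ _ Hr).
  case: r Hr => [|[|[|[|r]]]] //= _; rewrite ?addr0 ?mul1r ?mulN1r /B /cmpl /Lsh /=;
  by rewrite /sP /sS ?sg_neg.
have pB : forall r, pf N (B r) by move=> r; rewrite /B; case: ifP.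
have Dc := fun mu => decomp mu Hu pB.
have CDS : forall c, Cf N (dl T) sS c = Dv K T a c.
  move=> c; apply: (Dsum (b := fun j => if j == 0%N then zeros else a j)) => //.
  by move=> j x Hj; have -> : (j == 0%N) = false by lia.
have CSD : forall c, Cf N sS (dl T) c = Dv K T a (- c) by move=> c; rewrite Cf_swap // CDS.
have CDD : forall c, Cf N (dl T) (dl T) c = if ((c %% T%:Z)%Z == 0) then K%:Z else 0.
  by move=> c; apply: Ddsum.
have CPS : forall c, Cf N sP sS c = Cf N sS sS c - 2 * Dv K T a c.
  by move=> c; rewrite (Cf_linl _ _ _ sPE') CDS.
have CSP : forall c, Cf N sS sP c = Cf N sS sS c - 2 * Dv K T a (- c).
  by move=> c; rewrite (Cf_linr _ _ _ sPE') CSD.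
have CPP : forall c, Cf N sP sP c = Cf N sS sS c - 2 * Dv K T a (- c) - 2 * Dv K T a c
     + 4 * (if ((c %% T%:Z)%Z == 0) then K%:Z else 0).
  move=> c; rewrite (Cf_linl _ _ _ sPE') (Cf_linr _ _ _ sPE') (Cf_linr _ _ _ sPE').
  rewrite CDS CSD CDD; ring.
have R1 : forall mu, (mu %% 4 = 1)%N ->
    let p := inv4 + eta + (mu %/ 4)%N%:Z in let q := inv4 - eta + (mu %/ 4)%N%:Z in
    acorr (4 * N) u mu%:Z = 2 * Dv K T a (- p) + 2 * Dv K T a p - 4 * (if ((p %% T%:Z)%Z == 0) then K%:Z else 0)
       - 2 * Dv K T a q + 2 * Dv K T a (- q).
  move=> mu Hm p q; rewrite Dc Hm !big_ord_recr big_ord0 /=.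
  rewrite /modn /divn /= /e4 /B /o /=.
  rewrite (@Cf_mod N sP sP _ p pP); last by apply: (dvd_comb (c := 0) (d := 0) H4 H2); rewrite /p !PoszD; ring.
  rewrite (@Cf_mod N sP sS _ q pS); last by apply: (dvd_comb (c := - inv2) (d := 2 * inv4) H4 H2); rewrite /q !PoszD; ring.
  rewrite (@Cf_mod N sS sS _ p pS); last by apply: (dvd_comb (c := inv2) (d := (-2 * inv4)) H4 H2); rewrite /p !PoszD; ring.
  rewrite (@Cf_mod N sS sP _ q pP); last by apply: (dvd_comb (c := (-1)) (d := 0) H4 H2); rewrite /q !PoszD; ring.
  rewrite CPP CPS CSP; ring.
have R0 : forall mu, (mu %% 4 = 0)%N ->
    let m := (mu %/ 4)%N%:Z in
    acorr (4 * N) u mu%:Z = 4 * Cf N sS sS m - 4 * Dv K T a (- m) - 4 * Dv K T a m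
       + 8 * (if ((m %% T%:Z)%Z == 0) then K%:Z else 0).
  move=> mu Hm m; rewrite Dc Hm !big_ord_recr big_ord0 /=.
  rewrite /modn /divn /= /e4 /B /o /= !addn0 !subr0 !addrK CPP /m; ring.
have R2 : forall mu, (mu %% 4 = 2)%N -> acorr (4 * N) u mu%:Z = 0.
  move=> mu Hm; rewrite Dc Hm !big_ord_recr big_ord0 /=.
  rewrite /modn /divn /= /e4 /B /o /=.
  set m := (mu %/ 4)%N.
  rewrite (@Cf_mod N sP sS ((m + 0)%N%:Z + (3 * inv4 + eta) - (inv4 + eta)) ((m + 0)%N%:Z + inv2 - 0) pS); last first.
    by apply: (dvd_comb (c := inv2) (d := -2 * inv4) H4 H2); ring.
  rewrite (@Cf_mod N sS sP ((m + 1)%N%:Z + (inv4 + eta) - (3 * inv4 + eta)) ((m + 1)%N%:Z + 0 - inv2) pP); last first.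
    by apply: (dvd_comb (c := - inv2) (d := 2 * inv4) H4 H2); rewrite !PoszD; ring.
  ring.
have R3 : forall mu, (mu %% 4 = 3)%N ->
    let p := 3 * inv4 + eta + (mu %/ 4)%N%:Z in let q := 3 * inv4 - eta + (mu %/ 4)%N%:Z in
    acorr (4 * N) u mu%:Z = 2 * Dv K T a p + 2 * Dv K T a (- q) + 2 * Dv K T a q
       - 4 * (if ((q %% T%:Z)%Z == 0) then K%:Z else 0) - 2 * Dv K T a (- p).
  move=> mu Hm p q; rewrite Dc Hm !big_ord_recr big_ord0 /=.
  rewrite /modn /divn /= /e4 /B /o /=.
  rewrite (@Cf_mod N sP sS _ p pS); last by apply: (dvd_comb (c := 0) (d := 0) H4 H2); rewrite /p !PoszD; ring.
  rewrite (@Cf_mod N sP sP _ q pP); last by apply: (dvd_comb (c := -1) (d := 0) H4 H2); rewrite /q !PoszD; ring.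
  rewrite (@Cf_mod N sS sP _ p pP); last by apply: (dvd_comb (c := inv2 - 1) (d := -2 * inv4) H4 H2); rewrite /p !PoszD; ring.
  rewrite (@Cf_mod N sS sS _ q pS); last by apply: (dvd_comb (c := -1 - inv2) (d := 2 * inv4) H4 H2); rewrite /q !PoszD; ring.
  rewrite CPP CPS CSP; ring.
have CSS0 : forall m : nat, m = 0%N -> Cf N sS sS m%:Z = (K * T)%N%:Z.
  move=> m ->; rewrite /Cf.
  have -> : \sum_(t < N) sS t%:Z * sS (t%:Z + 0%N%:Z) = \sum_(t < N) 1.
    by apply: eq_bigr => i _; rewrite addr0 /sS; case: (s _).
  by rewrite sumr_const card_ord natz.
split.
  move=> c1 Hc mu Hmu mu1 mu2 tau2 tau1p tau2m R.
  have Dm := fun x => Dv_mode1 x T0 Hc.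
  have Hs : acorr N s mu1%:Z = Cf N sS sS mu1%:Z by rewrite /acorr corr_Cf.
  rewrite Hs /R /tau2 /tau1p /tau2m /resT /mu2 /mu1.
  split.
    move=> H0; rewrite (R0 mu); last by rewrite H0.
    have [E1 E2] := Dm ((mu %/ 4)%N%:Z); rewrite E1 E2 CSS0; last by rewrite H0.
    rewrite H0 div0n mod0z eqxx; ring.
  split.
    move=> H0 Ht _; rewrite (R0 mu H0).
    have [E1 E2] := Dm ((mu %/ 4)%N%:Z); rewrite E1 E2 Ht eqxx; ring.
  split.
    move=> H0 Ht; rewrite (R0 mu H0).
    have [E1 E2] := Dm ((mu %/ 4)%N%:Z); rewrite E1 E2 (introF eqP Ht); ring.
  have [E1 E2] := Dm (inv4 + eta + (mu %/ 4)%N%:Z).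
  have [E3 E4] := Dm (inv4 - eta + (mu %/ 4)%N%:Z).
  have [E5 E6] := Dm (3 * inv4 + eta + (mu %/ 4)%N%:Z).
  have [E7 E8] := Dm (3 * inv4 - eta + (mu %/ 4)%N%:Z).
  split.
    move=> H1 Ht; rewrite (R1 mu H1) E1 E2 E3 E4 Ht eqxx; case: ifP => _; ring.
  split.
    move=> H1 Ht; rewrite (R1 mu H1) E1 E2 E3 E4 (introF eqP Ht); case: ifP => _; ring.
  split; first by move=> H2'; rewrite (R2 mu H2').
  split.
    move=> H3 Ht; rewrite (R3 mu H3) E5 E6 E7 E8 Ht eqxx; case: ifP => _; ring.
  move=> H3 Ht; rewrite (R3 mu H3) E5 E6 E7 E8 (introF eqP Ht); case: ifP => _; ring.
move=> Hc mu Hmu mu1 mu2 tau1m tau2p R.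
have F := fun x => Dv_mode2 x T0 Hc.
have Dz : forall x, (x %% T%:Z)%Z = 0 -> Dv K T a x = K%:Z by move=> x H; rewrite /Dv H eqxx.
have Dn : forall x, (x %% T%:Z)%Z <> 0 -> Dv K T a x = - dbal K (a `|(x %% T%:Z)%Z|%N).
  by move=> x H; rewrite /Dv (introF eqP H).
have Hs : acorr N s mu1%:Z = Cf N sS sS mu1%:Z by rewrite /acorr corr_Cf.
rewrite Hs /R /tau1m /tau2p /resT /mu2 /mu1.
pose p1 := inv4 + eta + (mu %/ 4)%N%:Z.
pose q1 := inv4 - eta + (mu %/ 4)%N%:Z.
pose p3 := 3 * inv4 + eta + (mu %/ 4)%N%:Z.
pose q3 := 3 * inv4 - eta + (mu %/ 4)%N%:Z.
split.
  move=> H0; rewrite (R0 mu); last by rewrite H0.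
  rewrite (F ((mu %/ 4)%N%:Z)) CSS0; last by rewrite H0.
  rewrite H0 div0n mod0z eqxx /Dv mod0z eqxx; ring.
split.
  move=> H0 _; rewrite (R0 mu H0) (F ((mu %/ 4)%N%:Z)).
  case: ifP => H; [rewrite (Dz _ (eqP H))|]; ring.
split.
  move=> H1 Ht; rewrite (R1 mu H1) (F p1) (F q1) -/q1 Ht eqxx (Dz _ Ht).
  case: ifP => Hp; [rewrite (Dz _ (eqP Hp))|]; ring.
split.
  move=> H1 Ht; rewrite (R1 mu H1) (F p1) (F q1) -/q1 (introF eqP Ht) (Dn _ Ht).
  case: ifP => Hp; [rewrite (Dz _ (eqP Hp))|]; ring.
split; first by move=> H2'; rewrite (R2 mu H2').
split.
  move=> H3 Ht; rewrite (R3 mu H3) (F p3) (F q3) -/p3 Ht eqxx (Dz _ Ht).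
  case: ifP => Hq; [rewrite (Dz _ (eqP Hq))|]; ring.
move=> H3 Ht; rewrite (R3 mu H3) (F p3) (F q3) -/p3 (introF eqP Ht) (Dn _ Ht).
case: ifP => Hq; [rewrite (Dz _ (eqP Hq))|]; ring.
Qed.
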